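(* Fix one of the three notions of free operations (detection-incoherent, creation-incoherent, detection-creation-incoherent). A functional $M$ from quantum operations to $[0,\infty)$ is a measure if and only if all of the following hold: $M(\Theta)=0\Leftrightarrow\Theta$ is free; $M(\Theta)\ge M(\Phi\circ\Theta)$ for all $\Theta$ and all free $\Phi$; $M(\Theta)\ge M(\Theta\circ\Phi)$ for all $\Theta$ and all free $\Phi$; $M(\Theta)\ge M(\Theta\otimes\mathbb{1})$ for all $\Theta$, where $\mathbb{1}$ is the identity channel on an ancillary system; and $M$ is convex.
   Context: Every finite-dimensional system carries a fixed orthonormal incoherent basis $\{|i\rangle\}$; composite systems use the product basis. The total dephasing map is $\Delta(\rho)=\sum_i|i\rangle\langle i|\rho|i\rangle\langle i|$ (tensor product on composite systems). A quantum operation is a completely positive trace-preserving linear map. $\Phi$ is detection-incoherent iff $\Delta\Phi=\Delta\Phi\Delta$, creation-incoherent iff $\Phi\Delta=\Delta\Phi\Delta$, detection-creation-incoherent iff $\Delta\Phi=\Phi\Delta$. A super-operation is free iff it is a finite composition of elemental super-operations $\Theta\mapsto\Phi\circ\Theta$, $\Theta\mapsto\Theta\circ\Phi$, $\Theta\mapsto\Theta\otimes\Phi$, $\Theta\mapsto\Phi\otimes\Theta$ with $\Phi$ free. A measure is a functional $M$ from quantum operations to $[0,\infty)$ such that (i) $M(\Theta)=0$ iff $\Theta$ is free; (ii) $M(\mathcal{F}[\Theta])\le M(\Theta)$ for all $\Theta$ and all free super-operations $\mathcal{F}$; (iii) $M$ is convex: $M(t\Theta+(1-t)\Psi)\le tM(\Theta)+(1-t)M(\Psi)$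 for $t\in[0,1]$ and $\Theta,\Psi$ with the same input and output systems. *)

(* Defs.v *)
From HB Require Import structures.
From mathcomp Require Import all_boot all_order all_algebra.
From mathcomp Require Import complex mxtens.
From mathcomp Require Import reals.
Set Implicit Arguments. Unset Strict Implicit. Unset Printing Implicit Defensive.
Import Order.TTheory GRing.Theory Num.Theory.
Local Open Scope ring_scope.
Local Open Scope complex_scope.

Section QDefs.
Variable R : realType.
Local Notation C := (R[i]).

(* Systems are identified by their dimension; the incoherent basis is the
   standard basis, and the composite system of dimensions n and m is the
   Kronecker product (dimension n*m), whose standard basis is the product basis. *)
Definition qmap (n m : nat) := 'M[C]_n -> 'M[C]_m.

Definition adjmx n m (A : 'M[C]_(n, m)) : 'M[C]_(m, n) :=
  (map_mx (fun z : C => z^*) A)^T.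

Definition psd n (A : 'M[C]_n) : Prop :=
  forall v : 'cV[C]_n, 0 <= (adjmx v *m A *m v) 0 0.

Definition tensmap a1 b1 a2 b2 (T : qmap a1 b1) (P : qmap a2 b2) : qmap (a1 * a2) (b1 * b2) :=
  fun X => \sum_(i < a1) \sum_(j < a1) \sum_(k < a2) \sum_(l < a2)
     X (mxtens_index (i, k)) (mxtens_index (j, l)) *: (T (delta_mx i j) *t P (delta_mx k l)).

Definition qlinear n m (f : qmap n m) : Prop :=
  forall (c : C) (X Y : 'M[C]_n), f (c *: X + Y) = c *: f X + f Y.

Definition completely_positive n m (f : qmap n m) : Prop :=
  forall (k : nat) (X : 'M[C]_(k * n)), psd X -> psd (tensmap (@idfun 'M[C]_k) f X).

Definition trace_preserving n m (f : qmap n m) : Prop :=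
  forall X : 'M[C]_n, \tr (f X) = \tr X.

Definition is_qop n m (f : qmap n m) : Prop :=
  [/\ (0 < n)%N, (0 < m)%N, qlinear f, completely_positive f & trace_preserving f].

Definition deph n : qmap n n :=
  fun X => \matrix_(i, j) (if i == j then X i j else 0).

Inductive free_kind := DI | CI | DCI.

Definition is_free (t : free_kind) n m (f : qmap n m) : Prop :=
  is_qop f /\
  match t with
  | DI  => forall X, deph (f X) = deph (f (deph X))
  | CI  => forall X, f (deph X) = deph (f (deph X))
  | DCI => forall X, deph (f X) = f (deph X)
  end.

Inductive free_superop (t : free_kind) :
  forall a b c d : nat, (qmap a b -> qmap c d) -> Prop :=
| fso_post a b c (P : qmap b c) : is_free t P ->
    @free_superop t a b a c (fun T => P \o T)
| fso_pre a b c (P : qmap c a) : is_free t P ->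
    @free_superop t a b c b (fun T => T \o P)
| fso_tensr a b c d (P : qmap c d) : is_free t P ->
    @free_superop t a b (a * c) (b * d) (fun T => tensmap T P)
| fso_tensl a b c d (P : qmap c d) : is_free t P ->
    @free_superop t a b (c * a) (d * b) (fun T => tensmap P T)
| fso_comp a b c d e f (F : qmap a b -> qmap c d) (G : qmap c d -> qmap e f) :
    free_superop t F -> free_superop t G -> free_superop t (G \o F).

Definition functional := forall n m : nat, qmap n m -> R.

Definition nonneg_on_qops (M : functional) : Prop :=
  forall n m (T : qmap n m), is_qop T -> 0 <= M n m T.

Definition faithful_on_free (t : free_kind) (M : functional) : Prop :=
  forall n m (T : qmap n m), is_qop T -> (M n m T = 0 <-> is_free t T).

Definition convex_functional (M : functional) : Prop :=
  forall n m (T P Q : qmap n m) (s : R), is_qop T -> is_qop P -> 0 <= s <= 1 ->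
    (forall X, Q X = s%:C *: T X + (1 - s)%:C *: P X) ->
    M n m Q <= s * M n m T + (1 - s) * M n m P.

Definition is_measure (t : free_kind) (M : functional) : Prop :=
  [/\ nonneg_on_qops M,
      faithful_on_free t M,
      (forall a b c d (F : qmap a b -> qmap c d) (T : qmap a b),
          free_superop t F -> is_qop T -> M c d (F T) <= M a b T)
    & convex_functional M].

End QDefs.

(* Main.v *)
Require Import Defs.
From HB Require Import structures.
From mathcomp Require Import all_boot all_order all_algebra.
From mathcomp Require Import complex mxtens.
From mathcomp Require Import reals.
From Stdlib Require Import FunctionalExtensionality.
Set Implicit Arguments. Unset Strict Implicit. Unset Printing Implicit Defensive.
Import Order.TTheory GRing.Theory Num.Theory.
Local Open Scope ring_scope.
Local Open Scope complex_scope.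

Section Aux.
Variable R : realType.
Local Notation C := (R[i]).
Local Notation idx := mxtens_index.
Local Notation uidx := mxtens_unindex.

Definition glin m n p q (f : 'M[C]_(m, n) -> 'M[C]_(p, q)) :=
  forall (c : C) X Y, f (c *: X + Y) = c *: f X + f Y.

Lemma glin0 m n p q (f : 'M[C]_(m, n) -> 'M[C]_(p, q)) : glin f -> f 0 = 0.
Proof.
move=> hf; have := hf 1 0 0; rewrite scale1r addr0.
rewrite scale1r; move/(congr1 (fun x => x - f 0)); rewrite subrr addrK => <-; done.
Qed.

Lemma glinD m n p q (f : 'M[C]_(m, n) -> 'M[C]_(p, q)) : glin f ->
  forall X Y, f (X + Y) = f X + f Y.
Proof. by move=> hf X Y; rewrite -[X]scale1r hf !scale1r. Qed.

Lemma glinZ m n p q (f : 'M[C]_(m, n) -> 'M[C]_(p, q)) : glin f ->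
  forall c X, f (c *: X) = c *: f X.
Proof. by move=> hf c X; rewrite -[c *: X]addr0 hf glin0 // addr0. Qed.

Lemma glin_sum m n p q (f : 'M[C]_(m, n) -> 'M[C]_(p, q)) (I : Type) (r : seq I)
   (P : pred I) (F : I -> 'M_(m, n)) : glin f ->
  f (\sum_(i <- r | P i) F i) = \sum_(i <- r | P i) f (F i).
Proof.
move=> hf; apply: (big_rec2 (fun x y => f x = y)); first exact: glin0.
by move=> i x y _ <-; rewrite glinD.
Qed.

Lemma glin_expand m n p q (f : 'M[C]_(m, n) -> 'M[C]_(p, q)) : glin f ->
  forall X, f X = \sum_(i < m) \sum_(j < n) X i j *: f (delta_mx i j).
Proof.
move=> hf X; rewrite {1}[X]matrix_sum_delta glin_sum //.
by apply: eq_bigr => i _; rewrite glin_sum //; apply: eq_bigr => j _; rewrite glinZ.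
Qed.

Lemma ext0 m n p q (f g : 'M[C]_(m, n) -> 'M[C]_(p, q)) : glin f -> glin g ->
  (forall i j, f (delta_mx i j) = g (delta_mx i j)) -> forall X, f X = g X.
Proof.
move=> hf hg e X; rewrite (glin_expand hf) (glin_expand hg).
by apply: eq_bigr => i _; apply: eq_bigr => j _; rewrite e.
Qed.

Lemma idx_eq m n (a b : 'I_m * 'I_n) : (idx a == idx b) = (a == b).
Proof. exact: (inj_eq (can_inj (@mxtens_indexK m n))). Qed.

Lemma delta_tens m n p q (i : 'I_m) (j : 'I_n) (k : 'I_p) (l : 'I_q) :
  delta_mx i j *t delta_mx k l = delta_mx (idx (i, k)) (idx (j, l)) :> 'M[C]_(_, _).
Proof.
apply/matrixP => x y.
case: (mxtens_indexP x) => i0 k0.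
case: (mxtens_indexP y) => j0 l0.
rewrite tensmxE !mxE !idx_eq !xpair_eqE.
by case: (i0 == i); case: (j0 == j); case: (k0 == k); case: (l0 == l); rewrite /= ?mulr1 ?mulr0 ?mul0r.
Qed.

Lemma sum_delta2 (V : lmodType C) m n (i : 'I_m) (j : 'I_n) (G : 'I_m -> 'I_n -> V) :
  \sum_(i' < m) \sum_(j' < n) (delta_mx i j : 'M[C]_(m, n)) i' j' *: G i' j' = G i j.
Proof.
rewrite (bigD1 i) //= (bigD1 j) //= !mxE !eqxx /= scale1r.
rewrite big1 => [|j' /negbTE nj]; last by rewrite mxE nj andbF scale0r.
rewrite addr0 big1 ?addr0 // => i' /negbTE ni.
by rewrite big1 // => j' _; rewrite mxE ni scale0r.
Qed.


Lemma tensmx_suml m n p q (I : Type) (r : seq I) (P : pred I) (F : I -> 'M[C]_(m, n)) (B : 'M[C]_(p, q)) :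
  (\sum_(i <- r | P i) F i) *t B = \sum_(i <- r | P i) (F i *t B).
Proof.
apply/matrixP => x y; rewrite mxE !summxE big_distrl /=.
by apply: eq_bigr => i _; rewrite mxE.
Qed.

Lemma tensmx_sumr m n p q (I : Type) (r : seq I) (P : pred I) (F : I -> 'M[C]_(p, q)) (A : 'M[C]_(m, n)) :
  A *t (\sum_(i <- r | P i) F i) = \sum_(i <- r | P i) (A *t F i).
Proof.
apply/matrixP => x y; rewrite mxE !summxE big_distrr /=.
by apply: eq_bigr => i _; rewrite mxE.
Qed.

Lemma tensmxZl m n p q (c : C) (A : 'M[C]_(m, n)) (B : 'M[C]_(p, q)) :
  (c *: A) *t B = c *: (A *t B).
Proof. by apply/matrixP => x y; rewrite !mxE mulrA. Qed.

Lemma tensmxZr m n p q (c : C) (A : 'M[C]_(m, n)) (B : 'M[C]_(p, q)) :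
  A *t (c *: B) = c *: (A *t B).
Proof. by apply/matrixP => x y; rewrite !mxE mulrCA. Qed.

Lemma tensmap_delta a1 b1 a2 b2 (f : qmap R a1 b1) (g : qmap R a2 b2) i j k l :
  tensmap f g (delta_mx i j *t delta_mx k l) = f (delta_mx i j) *t g (delta_mx k l).
Proof.
rewrite /tensmap.
transitivity (\sum_(i' < a1) \sum_(j' < a1) (delta_mx i j : 'M[C]_a1) i' j' *:
   \sum_(k' < a2) \sum_(l' < a2) (delta_mx k l : 'M[C]_a2) k' l' *:
      (f (delta_mx i' j') *t g (delta_mx k' l'))).
  apply: eq_bigr => i' _; apply: eq_bigr => j' _; rewrite scaler_sumr.
  apply: eq_bigr => k' _; rewrite scaler_sumr; apply: eq_bigr => l' _.
  by rewrite tensmxE scalerA.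
rewrite (sum_delta2 i j (fun i' j' => \sum_(k' < a2) \sum_(l' < a2) (delta_mx k l : 'M[C]_a2) k' l' *:
      (f (delta_mx i' j') *t g (delta_mx k' l')))).
exact: (sum_delta2 k l (fun k' l' => f (delta_mx i j) *t g (delta_mx k' l'))).
Qed.

Lemma tensmap_lin a1 b1 a2 b2 (f : qmap R a1 b1) (g : qmap R a2 b2) : glin (tensmap f g).
Proof.
move=> c X Y; rewrite /tensmap.
rewrite scaler_sumr -big_split; apply: eq_bigr => i _.
rewrite scaler_sumr -big_split; apply: eq_bigr => j _.
rewrite scaler_sumr -big_split; apply: eq_bigr => k _.
rewrite scaler_sumr -big_split; apply: eq_bigr => l _.
by rewrite !mxE scalerDl scalerA.
Qed.

Lemma tensmap_tens a1 b1 a2 b2 (f : qmap R a1 b1) (g : qmap R a2 b2) (A : 'M[C]_a1) (B : 'M[C]_a2) :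
  glin f -> glin g -> tensmap f g (A *t B) = f A *t g B.
Proof.
move=> hf hg; rewrite /tensmap (glin_expand hf A) (glin_expand hg B) tensmx_suml.
apply: eq_bigr => i _; rewrite tensmx_suml; apply: eq_bigr => j _.
rewrite tensmxZl tensmx_sumr scaler_sumr; apply: eq_bigr => k _.
rewrite tensmx_sumr scaler_sumr; apply: eq_bigr => l _.
by rewrite tensmxZr tensmxE scalerA.
Qed.


Lemma glin_id n : glin (@idfun 'M[C]_n).
Proof. by []. Qed.

Lemma glin_comp m n p (f : 'M[C]_m -> 'M[C]_n) (g : 'M[C]_n -> 'M[C]_p) :
  glin f -> glin g -> glin (g \o f).
Proof. by move=> hf hg c X Y /=; rewrite hf hg. Qed.

Lemma ext2 a b n (f g : 'M[C]_(a * b) -> 'M[C]_n) : glin f -> glin g ->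
  (forall i j k l, f (delta_mx i j *t delta_mx k l) = g (delta_mx i j *t delta_mx k l)) ->
  forall X, f X = g X.
Proof.
move=> hf hg e; apply: ext0 => // x y.
case: (mxtens_indexP x) => i k; case: (mxtens_indexP y) => j l.
by rewrite -delta_tens e.
Qed.

Lemma TM_comp a1 b1 c1 a2 b2 c2 (g : qmap R a1 b1) (f : qmap R b1 c1)
   (k : qmap R a2 b2) (h : qmap R b2 c2) : glin f -> glin h ->
  forall X, tensmap (f \o g) (h \o k) X = tensmap f h (tensmap g k X).
Proof.
move=> hf hh; apply: ext2; first exact: tensmap_lin.
  exact: glin_comp (tensmap_lin _ _) (tensmap_lin _ _).
by move=> i j k' l; rewrite /= !tensmap_delta tensmap_tens.
Qed.

Lemma glin_deph n : glin (@deph R n).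
Proof.
move=> c X Y; apply/matrixP => i j; rewrite !mxE.
by case: (i == j); rewrite ?mulr0 ?addr0.
Qed.

Lemma deph_tens a b (A : 'M[C]_a) (B : 'M[C]_b) : deph (A *t B) = deph A *t deph B.
Proof.
apply/matrixP => x y; case: (mxtens_indexP x) => i k; case: (mxtens_indexP y) => j l.
rewrite mxE !tensmxE !mxE idx_eq xpair_eqE.
by case: (i == j); case: (k == l); rewrite /= ?mulr0 ?mul0r.
Qed.

Lemma deph_tensmap a b (X : 'M[C]_(a * b)) : deph X = tensmap (@deph R a) (@deph R b) X.
Proof.
apply: ext2 X; [exact: glin_deph | exact: tensmap_lin |].
by move=> i j k l; rewrite tensmap_delta deph_tens.
Qed.

Lemma dephK n (X : 'M[C]_n) : deph (deph X) = deph X.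
Proof. by apply/matrixP => i j; rewrite !mxE; case: (i == j). Qed.

Definition rix m n (s : 'I_m -> 'I_n) (X : 'M[C]_n) : 'M[C]_m :=
  \matrix_(i, j) X (s i) (s j).

Lemma glin_rix m n (s : 'I_m -> 'I_n) : glin (rix s).
Proof. by move=> c X Y; apply/matrixP => i j; rewrite !mxE. Qed.

Lemma adjmx_mul m n p (A : 'M[C]_(m, n)) (B : 'M[C]_(n, p)) :
  adjmx (A *m B) = adjmx B *m adjmx A.
Proof. by rewrite /adjmx map_mxM trmx_mul. Qed.

Lemma psd_conj m n (A : 'M[C]_n) (B : 'M[C]_(n, m)) : psd A -> psd (adjmx B *m A *m B).
Proof.
move=> hA v; have := hA (B *m v).
by rewrite adjmx_mul !mulmxA.
Qed.

Lemma rix_conj m n (s : 'I_m -> 'I_n) (X : 'M[C]_n) :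
  rix s X = adjmx (\matrix_(p, i) ((p == s i)%:R : C)) *m X *m (\matrix_(p, i) ((p == s i)%:R : C)).
Proof.
apply/matrixP => i j; rewrite /adjmx !mxE.
rewrite (bigD1 (s j)) //= big1 ?addr0 => [|q /negbTE nq]; last by rewrite !mxE nq mulr0.
rewrite !mxE eqxx mulr1 (bigD1 (s i)) //= big1 ?addr0 => [|p /negbTE np]; last first.
  by rewrite !mxE np conjc0 mul0r.
by rewrite !mxE eqxx conjc1 mul1r.
Qed.

Lemma psd_rix m n (s : 'I_m -> 'I_n) (X : 'M[C]_n) : psd X -> psd (rix s X).
Proof. by move=> hX; rewrite rix_conj; apply: psd_conj. Qed.


Definition aL k a b (x : 'I_((k * a) * b)) : 'I_(k * (a * b)) :=
  idx ((uidx (uidx x).1).1, idx ((uidx (uidx x).1).2, (uidx x).2)).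
Definition aR k a b (x : 'I_(k * (a * b))) : 'I_((k * a) * b) :=
  idx (idx ((uidx x).1, (uidx (uidx x).2).1), (uidx (uidx x).2).2).
Definition tw k a b (x : 'I_((k * b) * a)) : 'I_(k * (a * b)) :=
  idx ((uidx (uidx x).1).1, idx ((uidx x).2, (uidx (uidx x).1).2)).
Definition tw' k a b (x : 'I_(k * (a * b))) : 'I_((k * b) * a) :=
  idx (idx ((uidx x).1, (uidx (uidx x).2).2), (uidx (uidx x).2).1).

Lemma rix_aL k a b (A : 'M[C]_k) (B : 'M[C]_a) (D : 'M[C]_b) :
  rix (@aL k a b) (A *t (B *t D)) = (A *t B) *t D.
Proof.
apply/matrixP => x y.
case: (mxtens_indexP x) => p l; case: (mxtens_indexP p) => i j.
case: (mxtens_indexP y) => p' l'; case: (mxtens_indexP p') => i' j'.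
by rewrite mxE /aL !mxtens_indexK /= !tensmxE mulrA.
Qed.

Lemma rix_aR k a b (A : 'M[C]_k) (B : 'M[C]_a) (D : 'M[C]_b) :
  rix (@aR k a b) ((A *t B) *t D) = A *t (B *t D).
Proof.
apply/matrixP => x y.
case: (mxtens_indexP x) => i p; case: (mxtens_indexP p) => j l.
case: (mxtens_indexP y) => i' p'; case: (mxtens_indexP p') => j' l'.
by rewrite mxE /aR !mxtens_indexK /= !tensmxE mulrA.
Qed.

Lemma rix_tw k a b (A : 'M[C]_k) (B : 'M[C]_a) (D : 'M[C]_b) :
  rix (@tw k a b) (A *t (B *t D)) = (A *t D) *t B.
Proof.
apply/matrixP => x y.
case: (mxtens_indexP x) => p l; case: (mxtens_indexP p) => i j.
case: (mxtens_indexP y) => p' l'; case: (mxtens_indexP p') => i' j'.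
by rewrite mxE /tw !mxtens_indexK /= !tensmxE mulrA mulrAC.
Qed.

Lemma rix_tw' k a b (A : 'M[C]_k) (B : 'M[C]_a) (D : 'M[C]_b) :
  rix (@tw' k a b) ((A *t D) *t B) = A *t (B *t D).
Proof.
apply/matrixP => x y.
case: (mxtens_indexP x) => i p; case: (mxtens_indexP p) => j l.
case: (mxtens_indexP y) => i' p'; case: (mxtens_indexP p') => j' l'.
by rewrite mxE /tw' !mxtens_indexK /= !tensmxE mulrA mulrAC.
Qed.

Lemma cp_idP a b c (P : qmap R b c) : glin P -> completely_positive P ->
  completely_positive (tensmap (@idfun 'M[C]_a) P).
Proof.
move=> hP cp k X hX.
pose g := (@rix _ _ (@aR k a c)) \o (tensmap (@idfun 'M[C]_(k * a)) P) \o (@rix _ _ (@aL k a b)).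
have -> : tensmap (@idfun 'M[C]_k) (tensmap (@idfun 'M[C]_a) P) X = g X.
  apply: (@ext2 _ _ _ (tensmap (@idfun 'M[C]_k) (tensmap (@idfun 'M[C]_a) P)) g).
  - exact: tensmap_lin.
  - by rewrite /g; apply: glin_comp; [apply: glin_rix | apply: glin_comp; [apply: tensmap_lin | apply: glin_rix]].
  move=> i j p q; case: (mxtens_indexP p) => i1 k1; case: (mxtens_indexP q) => j1 l1.
  rewrite -delta_tens /g /= rix_aL tensmap_tens //; last exact: tensmap_lin.
  by rewrite tensmap_delta (tensmap_tens _ _ (@glin_id _) hP) rix_aR.
by apply: psd_rix; apply: cp; apply: psd_rix.
Qed.

Lemma cp_Tid a b c (T : qmap R a b) : glin T -> completely_positive T ->
  completely_positive (tensmap T (@idfun 'M[C]_c)).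
Proof.
move=> hT cp k X hX.
pose g := (@rix _ _ (@tw' k b c)) \o (tensmap (@idfun 'M[C]_(k * c)) T) \o (@rix _ _ (@tw k a c)).
have -> : tensmap (@idfun 'M[C]_k) (tensmap T (@idfun 'M[C]_c)) X = g X.
  apply: (@ext2 _ _ _ (tensmap (@idfun 'M[C]_k) (tensmap T (@idfun 'M[C]_c))) g).
  - exact: tensmap_lin.
  - by rewrite /g; apply: glin_comp; [apply: glin_rix | apply: glin_comp; [apply: tensmap_lin | apply: glin_rix]].
  move=> i j p q; case: (mxtens_indexP p) => i1 k1; case: (mxtens_indexP q) => j1 l1.
  rewrite -delta_tens /g /= rix_tw tensmap_tens //; last exact: tensmap_lin.
  by rewrite tensmap_delta (tensmap_tens _ _ (@glin_id _) hT) rix_tw'.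
by apply: psd_rix; apply: cp; apply: psd_rix.
Qed.

Lemma cp_comp a b c (f : qmap R a b) (g : qmap R b c) : glin g ->
  completely_positive f -> completely_positive g -> completely_positive (g \o f).
Proof.
move=> hg cf cg k X hX.
have := @TM_comp k k k a b c idfun idfun f g (@glin_id k) hg X.
by move=> /= ->; apply: cg; apply: cf.
Qed.

Lemma cp_tens a1 b1 a2 b2 (T : qmap R a1 b1) (P : qmap R a2 b2) : glin T -> glin P ->
  completely_positive T -> completely_positive P -> completely_positive (tensmap T P).
Proof.
move=> hT hP cT cP.
have -> : tensmap T P = (tensmap T (@idfun 'M[C]_b2)) \o (tensmap (@idfun 'M[C]_a1) P).
  apply: functional_extensionality => X.
  exact: (@TM_comp _ _ _ _ _ _ idfun T P idfun hT (@glin_id _) X).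
apply: cp_comp; first exact: tensmap_lin.
  exact: cp_idP.
exact: cp_Tid.
Qed.


Lemma sum_idx m n (F : 'I_(m * n) -> C) :
  \sum_(x < m * n) F x = \sum_(i < m) \sum_(k < n) F (idx (i, k)).
Proof.
rewrite pair_big /= (reindex (@mxtens_index m n)) /=; last first.
  by exists (@mxtens_unindex m n) => y _; [exact: mxtens_indexK | exact: mxtens_unindexK].
by apply: eq_bigr => -[i k].
Qed.

Lemma mxtrace_tens m n (A : 'M[C]_m) (B : 'M[C]_n) : \tr (A *t B) = \tr A * \tr B.
Proof.
rewrite /mxtrace sum_idx big_distrl; apply: eq_bigr => i _.
by rewrite big_distrr; apply: eq_bigr => k _; rewrite tensmxE.
Qed.

Lemma mxtrace_delta n (i j : 'I_n) : \tr (delta_mx i j : 'M[C]_n) = (i == j)%:R.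
Proof.
rewrite /mxtrace (bigD1 i) //= big1 => [|x /negbTE nx]; last by rewrite mxE nx.
by rewrite mxE eqxx addr0.
Qed.

Lemma trZ n (c : C) (A : 'M[C]_n) : \tr (c *: A) = c * \tr A.
Proof. by rewrite /mxtrace mulr_sumr; apply: eq_bigr => i _; rewrite mxE. Qed.

Lemma tp_tens a1 b1 a2 b2 (T : qmap R a1 b1) (P : qmap R a2 b2) :
  trace_preserving T -> trace_preserving P -> trace_preserving (tensmap T P).
Proof.
move=> hT hP X.
have -> : \tr X = \sum_(i < a1) \sum_(k < a2) X (idx (i, k)) (idx (i, k)) by rewrite /mxtrace sum_idx.
transitivity (\sum_(i < a1) \sum_(j < a1) \sum_(k < a2) \sum_(l < a2)
   X (idx (i, k)) (idx (j, l)) * ((i == j)%:R * (k == l)%:R)).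
  rewrite /tensmap (@raddf_sum _ _ (@mxtrace C _)); apply: eq_bigr => i _.
  rewrite (@raddf_sum _ _ (@mxtrace C _)); apply: eq_bigr => j _.
  rewrite (@raddf_sum _ _ (@mxtrace C _)); apply: eq_bigr => k _.
  rewrite (@raddf_sum _ _ (@mxtrace C _)); apply: eq_bigr => l _.
  by etransitivity; [exact: trZ | rewrite mxtrace_tens hT hP !mxtrace_delta].
apply: eq_bigr => i _; rewrite (bigD1 i) //= [Y in _ + Y]big1 ?addr0 => [| j /negbTE nj]; last first.
  by rewrite big1 // => k _; rewrite big1 // => l _; rewrite eq_sym nj mul0r mulr0.
apply: eq_bigr => k _; rewrite (bigD1 k) //= [Y in _ + Y]big1 ?addr0 => [| l /negbTE nl]; last first.
  by rewrite eq_sym nl mulr0 mulr0.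
by rewrite !eqxx !mulr1.
Qed.

Lemma qop_comp a b c (f : qmap R a b) (g : qmap R b c) :
  is_qop f -> is_qop g -> is_qop (g \o f).
Proof.
case=> fa fb lf cf tf [_ gc lg cg tg]; split => //.
- exact: glin_comp.
- exact: cp_comp.
- by move=> X /=; rewrite tg tf.
Qed.

Lemma qop_tens a1 b1 a2 b2 (T : qmap R a1 b1) (P : qmap R a2 b2) :
  is_qop T -> is_qop P -> is_qop (tensmap T P).
Proof.
case=> ha hb lT cT tT [hc hd lP cP tP]; split; rewrite ?muln_gt0 ?ha ?hb ?hc ?hd //.
- exact: tensmap_lin.
- exact: cp_tens.
- exact: tp_tens.
Qed.

Lemma tensmap_idid k n (X : 'M[C]_(k * n)) : tensmap (@idfun 'M[C]_k) (@idfun 'M[C]_n) X = X.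
Proof.
apply: (@ext2 _ _ _ _ idfun); [exact: tensmap_lin | exact: glin_id |].
by move=> i j k' l; rewrite tensmap_delta.
Qed.

Lemma qop_id n : (0 < n)%N -> is_qop (@idfun 'M[C]_n).
Proof.
move=> hn; split => //; try exact: glin_id.
by move=> k X hX; rewrite tensmap_idid.
Qed.

Definition lifts k m n (s : 'I_m -> 'I_n) (x : 'I_(k * m)) : 'I_(k * n) :=
  idx ((uidx x).1, s (uidx x).2).

Lemma rix_lifts k m n (s : 'I_m -> 'I_n) (A : 'M[C]_k) (B : 'M[C]_n) :
  rix (@lifts k _ _ s) (A *t B) = A *t rix s B.
Proof.
apply/matrixP => x y.
case: (mxtens_indexP x) => i p; case: (mxtens_indexP y) => j q.
by rewrite mxE /lifts !mxtens_indexK /= !tensmxE mxE.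
Qed.

Lemma qop_rix m n (s : 'I_m -> 'I_n) : (0 < m)%N -> (0 < n)%N -> bijective s ->
  is_qop (rix s).
Proof.
move=> hm hn bs; split => //; first exact: glin_rix.
- move=> k X hX.
  have -> : tensmap (@idfun 'M[C]_k) (rix s) X = rix (@lifts k _ _ s) X.
    apply: (@ext2 _ _ _ _ (rix (@lifts k _ _ s))); [exact: tensmap_lin | exact: glin_rix |].
    by move=> i j p q; rewrite tensmap_delta rix_lifts.
  exact: psd_rix.
- move=> X; rewrite /mxtrace.
  rewrite (reindex s) /=; last exact: onW_bij.
  by apply: eq_bigr => i _; rewrite mxE.
Qed.

Lemma free_of_comm t a b (f : qmap R a b) : is_qop f ->
  (forall X, deph (f X) = f (deph X)) -> is_free t f.
Proof.
move=> qf cf; split => //; case: t => X.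
- by rewrite cf [in RHS]cf dephK.
- by rewrite cf dephK.
- exact: cf.
Qed.

Lemma free_rix t m n (s : 'I_m -> 'I_n) : (0 < m)%N -> (0 < n)%N -> bijective s ->
  is_free t (rix s).
Proof.
move=> hm hn bs; apply: free_of_comm; first exact: qop_rix.
move=> X; apply/matrixP => i j; rewrite !mxE (bij_eq bs).
by case: (i == j).
Qed.

Lemma free_id t n : (0 < n)%N -> is_free t (@idfun 'M[C]_n).
Proof. by move=> hn; apply: free_of_comm => //; apply: qop_id. Qed.


Lemma tensmap_deph a1 b1 a2 b2 (f : qmap R a1 b1) (g : qmap R a2 b2) :
  glin f -> glin g -> forall X,
  tensmap f g (deph X) = tensmap (f \o (@deph R a1)) (g \o (@deph R a2)) X.
Proof. by move=> lf lg X; rewrite (TM_comp _ _ lf lg) -deph_tensmap. Qed.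

Lemma deph_tensmap2 a1 b1 a2 b2 (f : qmap R a1 b1) (g : qmap R a2 b2) X :
  deph (tensmap f g X) = tensmap ((@deph R b1) \o f) ((@deph R b2) \o g) X.
Proof. by rewrite (TM_comp _ _ (@glin_deph _) (@glin_deph _)) -deph_tensmap. Qed.

Lemma free_tens t a1 b1 a2 b2 (f : qmap R a1 b1) (g : qmap R a2 b2) :
  is_free t f -> is_free t g -> is_free t (tensmap f g).
Proof.
case=> qf hf [qg hg]; split; first exact: qop_tens.
have lf : glin f by case: qf.
have lg : glin g by case: qg.
have ldf : glin ((@deph R b1) \o f) by apply: glin_comp => //; apply: glin_deph.
have ldg : glin ((@deph R b2) \o g) by apply: glin_comp => //; apply: glin_deph.
case: t hf hg => /= hf hg X.
- rewrite !deph_tensmap2 (tensmap_deph ldf ldg).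
  by congr (tensmap _ _ X); apply: functional_extensionality => Y /=; first [exact: hf | exact: hg].
- rewrite deph_tensmap2 (tensmap_deph ldf ldg) (tensmap_deph lf lg).
  by congr (tensmap _ _ X); apply: functional_extensionality => Y /=; first [exact: hf | exact: hg].
- rewrite deph_tensmap2 (tensmap_deph lf lg).
  by congr (tensmap _ _ X); apply: functional_extensionality => Y /=; first [exact: hf | exact: hg].
Qed.

Definition sw m n (x : 'I_(m * n)) : 'I_(n * m) := idx ((uidx x).2, (uidx x).1).

Lemma rix_sw m n (A : 'M[C]_m) (B : 'M[C]_n) : rix (@sw m n) (B *t A) = A *t B.
Proof.
apply/matrixP => x y.
case: (mxtens_indexP x) => i k; case: (mxtens_indexP y) => j l.
by rewrite mxE /sw !mxtens_indexK /= !tensmxE mulrC.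
Qed.

Lemma sw_bij m n : bijective (@sw m n).
Proof.
exists (@sw n m) => x; case: (mxtens_indexP x) => i k; by rewrite /sw !mxtens_indexK.
Qed.

Lemma tens_swap c d a b (P : qmap R c d) (T : qmap R a b) :
  tensmap P T = rix (@sw d b) \o (tensmap T P \o rix (@sw a c)).
Proof.
apply: functional_extensionality => X.
apply: (@ext2 _ _ _ _ (rix (@sw d b) \o (tensmap T P \o rix (@sw a c)))).
- exact: tensmap_lin.
- by apply: glin_comp; [apply: glin_comp; [apply: glin_rix | apply: tensmap_lin] | apply: glin_rix].
by move=> i j k l /=; rewrite tensmap_delta rix_sw tensmap_delta rix_sw.
Qed.

Lemma tensr_bound t (M : functional R) :
  (forall n m p (T : qmap R n m) (P : qmap R m p),
          is_qop T -> is_free t P -> M n p (P \o T) <= M n m T) ->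
  (forall n m k (T : qmap R n m), (0 < k)%N -> is_qop T ->
          M (n * k)%N (m * k)%N (tensmap T (@idfun 'M[R[i]]_k)) <= M n m T) ->
  forall a b c d (T : qmap R a b) (P : qmap R c d), is_qop T -> is_free t P ->
  M _ _ (tensmap T P) <= M _ _ T.
Proof.
move=> hpost htens a b c d T P qT fP.
have lP : glin P by case: fP => -[].
have hb : (0 < b)%N by case: qT.
have hc : (0 < c)%N by case: fP => -[].
have -> : tensmap T P = tensmap (@idfun 'M[C]_b) P \o tensmap T (@idfun 'M[C]_c).
  apply: functional_extensionality => X.
  exact: (@TM_comp _ _ _ _ _ _ T idfun idfun P (@glin_id _) lP X).
apply: le_trans (htens _ _ c T hc qT).
apply: hpost; first by apply: qop_tens => //; apply: qop_id.
by apply: free_tens => //; apply: free_id.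
Qed.

End Aux.

Theorem proposition13 (R : realType) (t : free_kind) (M : functional R) :
  nonneg_on_qops M ->
  (is_measure t M <->
   [/\ faithful_on_free t M,
       (forall n m p (T : qmap R n m) (P : qmap R m p),
          is_qop T -> is_free t P -> M n p (P \o T) <= M n m T),
       (forall n m p (T : qmap R n m) (P : qmap R p n),
          is_qop T -> is_free t P -> M p m (T \o P) <= M n m T),
       (forall n m k (T : qmap R n m), (0 < k)%N -> is_qop T ->
          M (n * k)%N (m * k)%N (tensmap T (@idfun 'M[R[i]]_k)) <= M n m T)
     & convex_functional M]).
Proof.
move=> Mnn; split.
  case=> _ hfaith hmono hconv; split => //.
  - by move=> n m p T P qT fP; exact: (hmono _ _ _ _ _ T (fso_post _ fP) qT).
  - by move=> n m p T P qT fP; exact: (hmono _ _ _ _ _ T (fso_pre _ fP) qT).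
  - by move=> n m k T hk qT; exact: (hmono _ _ _ _ _ T (fso_tensr n m (@free_id R t k hk)) qT).
case=> hfaith hpost hpre htens hconv; split => //.
suff H : forall a b c d (F : qmap R a b -> qmap R c d), free_superop t F ->
    forall T, is_qop T -> is_qop (F T) /\ M c d (F T) <= M a b T.
  by move=> a b c d F T hF qT; case: (H _ _ _ _ _ hF T qT).
move=> a b c d F; elim => {a b c d F}.
- move=> a b c P fP T qT; split; first exact: qop_comp qT fP.1.
  exact: hpost qT fP.
- move=> a b c P fP T qT; split; first exact: qop_comp fP.1 qT.
  exact: hpre qT fP.
- move=> a b c d P fP T qT; split; first exact: qop_tens qT fP.1.
  exact: (tensr_bound hpost htens qT fP).
- move=> a b c d P fP T qT; split; first exact: qop_tens fP.1 qT.
  have qP := fP.1.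
  have ha : (0 < a)%N by case: qT.
  have hb : (0 < b)%N by case: qT.
  have hc : (0 < c)%N by case: qP.
  have hd : (0 < d)%N by case: qP.
  rewrite tens_swap.
  have qTP := qop_tens qT qP.
  have q2 : is_qop (tensmap T P \o rix (@sw a c)).
    by apply: qop_comp qTP; apply: qop_rix; rewrite ?muln_gt0 ?ha ?hc //; apply: sw_bij.
  apply: le_trans (hpost _ _ _ _ _ q2 _) _.
    by apply: free_rix; rewrite ?muln_gt0 ?hb ?hd //; apply: sw_bij.
  apply: le_trans (hpre _ _ _ _ _ qTP _) _.
    by apply: free_rix; rewrite ?muln_gt0 ?ha ?hc //; apply: sw_bij.
  exact: (tensr_bound hpost htens qT fP).
- move=> a b c d e f F G hF IHF hG IHG T qT.
  case: (IHF T qT) => q1 l1; case: (IHG (F T) q1) => q2 l2.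
  by split => //; apply: le_trans l2 l1.
Qed.
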